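(* Let $Y_1,Y_2\subseteq Y$ and $Z_1,Z_2\subseteq Z$ with $Y_1\cap Y_2=\emptyset$ and $Z_1\cap Z_2=\emptyset$. Let $f\in\mathbb{F}[Y_1,Z_1]$ and $g\in\mathbb{F}[Y_2,Z_2]$. Then $\mathrm{maxrank}(M_{fg})=\mathrm{maxrank}(M_f)\cdot\mathrm{maxrank}(M_g)$.
   Context: $\mathbb{F}$ is a field, $Y=\{y_1,\dots,y_m\}$ and $Z=\{z_1,\dots,z_m\}$ are disjoint sets of variables. For $f\in\mathbb{F}[Y,Z]$, the polynomial coefficient matrix $M_f$ is the $2^m\times 2^m$ matrix with entries in $\mathbb{F}[Y,Z]$, rows indexed by monic multilinear monomials $p$ in $Y$ and columns by monic multilinear monomials $q$ in $Z$, where $M_f(p,q)=G$ if and only if $f$ can be uniquely written as $f=pq\,G+Q$ with $G$ containing no variable other than those present in $p$ and $q$, and $Q$ having no monomial which is divisible by $pq$ and contains only variables present in $p$ and $q$. For $S:Y\cup Z\to\mathbb{F}$, $M_f|_S$ is obtained by evaluating each entry at $S$, and $\mathrm{maxrank}(M_f)=\max_S\mathrm{rank}(M_f|_S)$. *)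

(* Defs.v *)
From mathcomp Require Import all_boot all_algebra.
From mathcomp Require Import mpoly.
From Stdlib Require Import ClassicalDescription.

Set Implicit Arguments.
Unset Strict Implicit.
Unset Printing Implicit Defensive.

Import GRing.Theory.
Local Open Scope ring_scope.

(* Variables: Y = {y_0..y_(m-1)} are the variables 'X_(lshift m i) and
   Z = {z_0..z_(m-1)} are the variables 'X_(rshift m j) of {mpoly F[m + m]}. *)

Definition varset (m : nat) (A B : {set 'I_m}) : {set 'I_(m + m)} :=
  [set lshift m i | i in A] :|: [set rshift m j | j in B].

(* The monic multilinear monomial prod_{x in S} x, as an exponent vector. *)
Definition ind_mnm (n : nat) (S : {set 'I_n}) : 'X_{1..n} :=
  [multinom (i \in S : nat) | i < n].

Definition poly_in_vars (F : fieldType) (m : nat) (A B : {set 'I_m})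
    (f : {mpoly F[m + m]}) : Prop :=
  forall a : 'X_{1..m + m}, a \in msupp f ->
    forall i : 'I_(m + m), i \notin varset A B -> a i = 0%N.

(* Entry M_f(p, q) for p = prod_{i in A} y_i, q = prod_{j in B} z_j.
   Writing f = pq G + Q with G only in the variables of pq and Q having no
   monomial divisible by pq using only the variables of pq, G is exactly the
   sum over the monomials x^a of f whose support is exactly the variable set
   of pq, of f_a * x^a / (pq). *)
Definition pcm_entry (F : fieldType) (m : nat) (f : {mpoly F[m + m]})
    (A B : {set 'I_m}) : {mpoly F[m + m]} :=
  let S := varset A B in
  \sum_(a <- msupp f | [forall i, (0 < a i)%N == (i \in S)])
     f@_a *: 'X_[mnm_sub a (ind_mnm S)].

(* The polynomial coefficient matrix M_f, rows indexed by the monic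
   multilinear monomials in Y (subsets of 'I_m), columns by those in Z. *)
Definition pcm (F : fieldType) (m : nat) (f : {mpoly F[m + m]}) :
    'M[{mpoly F[m + m]}]_(#|{set 'I_m}|) :=
  \matrix_(i, j) pcm_entry f (enum_val i) (enum_val j).

Definition pcm_eval (F : fieldType) (m : nat) (f : {mpoly F[m + m]})
    (v : 'I_(m + m) -> F) : 'M[F]_(#|{set 'I_m}|) :=
  map_mx (meval v) (pcm f).

Definition rank_realized (F : fieldType) (m : nat) (f : {mpoly F[m + m]})
    (k : nat) : bool :=
  if excluded_middle_informative
       (exists v : 'I_(m + m) -> F, \rank (pcm_eval f v) = k)
  then true else false.

(* maxrank(M_f) = max_S rank(M_f|_S)  (ranks are at most #|{set 'I_m}|). *)
Definition maxrank (F : fieldType) (m : nat) (f : {mpoly F[m + m]}) : nat :=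
  \max_(k < (#|{set 'I_m}|).+1 | rank_realized f k) k.

(* Main.v *)
Require Import Defs.
From mathcomp Require Import all_boot all_algebra.
From mathcomp Require Import mpoly ssrcomplements.
From mathcomp.real_closed Require Import mxtens.
From mathcomp Require Import zify.
From Stdlib Require Import ClassicalDescription.

Set Implicit Arguments.
Unset Strict Implicit.
Unset Printing Implicit Defensive.
Import GRing.Theory.
Local Open Scope ring_scope.


Section VarSet.
Variable m : nat.
Implicit Types A B C D : {set 'I_m}.

Lemma in_varsetL A B (j : 'I_m) : (lshift m j \in varset A B) = (j \in A).
Proof.
rewrite /varset inE mem_imset; last exact: lshift_inj.
case: (boolP (j \in A)) => //= _; apply/imsetP => [[k _ /(congr1 val) /=]].
move=> E; have := ltn_ord j; rewrite E; lia.
Qed.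

Lemma in_varsetR A B (j : 'I_m) : (rshift m j \in varset A B) = (j \in B).
Proof.
rewrite /varset inE (mem_imset _ _ (@rshift_inj m m)).
have -> : (rshift m j \in [set lshift m i | i in A]) = false.
  apply/imsetP => [[k _ /(congr1 val) /=]].
  move=> E; have := ltn_ord k; rewrite -E; lia.
by [].
Qed.

Lemma in_varset A B (i : 'I_(m + m)) :
  (i \in varset A B) = (match split i with inl j => j \in A | inr j => j \in B end).
Proof.
rewrite -[i]splitK; case: (split i) => j; rewrite unsplitK /=.
  exact: in_varsetL.
exact: in_varsetR.
Qed.

Lemma varset_sub A B C D :
  (varset A B \subset varset C D) = (A \subset C) && (B \subset D).
Proof.
apply/subsetP/andP.
  move=> H; split; apply/subsetP => j jA.
    by have := H (lshift m j); rewrite !in_varsetL; apply.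
  by have := H (rshift m j); rewrite !in_varsetR; apply.
move=> [/subsetP hA /subsetP hB] i; rewrite !in_varset.
by case: (split i) => j; [apply: hA | apply: hB].
Qed.

Lemma varsetU A B C D : varset A B :|: varset C D = varset (A :|: C) (B :|: D).
Proof.
apply/setP => i; rewrite inE !in_varset; case: (split i) => j; by rewrite inE.
Qed.

Lemma varsetI A B C D : varset A B :&: varset C D = varset (A :&: C) (B :&: D).
Proof.
apply/setP => i; rewrite inE !in_varset; case: (split i) => j; by rewrite inE.
Qed.

End VarSet.


Section MP.
Variables (F : fieldType) (n : nat).
Implicit Types (S V : {set 'I_n}) (a b : 'X_{1..n}) (h : {mpoly F[n]}).

Definition suppb a S := [forall i, (0 < a i)%N == (i \in S)].

Definition Eop S h : {mpoly F[n]} :=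
  \sum_(a <- msupp h | suppb a S) h@_a *: 'X_[mnm_sub a (ind_mnm S)].

Definition eop S a : {mpoly F[n]} :=
  if suppb a S then 'X_[mnm_sub a (ind_mnm S)] else 0.

Definition Lop (G : 'X_{1..n} -> {mpoly F[n]}) h :=
  \sum_(a <- msupp h) h@_a *: G a.

Lemma Eop_L S h : Eop S h = Lop (eop S) h.
Proof.
rewrite /Eop /Lop big_mkcond /=; apply: eq_bigr => a _.
by rewrite /eop; case: ifP => _ //; rewrite scaler0.
Qed.

Lemma LopE G h k : (msize h <= k)%N ->
  Lop G h = \sum_(a : 'X_{1..n < k}) h@_a *: G a.
Proof.
move=> le_hk; set I : subFinType _ := 'X_{1..n < k}.
rewrite /Lop (big_mksub I) ?msupp_uniq //=; first last.
  by move=> x /msize_mdeg_lt /leq_trans; apply.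
by rewrite big_rmcond //= => j /memN_msupp_eq0 ->; rewrite scale0r.
Qed.

Lemma LopD G p q : Lop G (p + q) = Lop G p + Lop G q.
Proof.
pose k := maxn (msize (p + q)) (maxn (msize p) (msize q)).
rewrite !(@LopE G _ k); try by rewrite /k !leq_max leqnn ?orbT.
by rewrite -big_split /=; apply: eq_bigr => a _; rewrite mcoeffD scalerDl.
Qed.

Lemma Lop0 G : Lop G 0 = 0.
Proof. by rewrite /Lop msupp0 big_nil. Qed.

Lemma LopZX G c a : Lop G (c *: 'X_[a]) = c *: G a.
Proof.
have [->|nz] := eqVneq c 0; first by rewrite !scale0r Lop0.
by rewrite /Lop msuppMCX // big_seq1 mcoeffZ mcoeffX eqxx mulr1.
Qed.

Lemma Lop_sum G (I : Type) (r : seq I) (c : I -> F) (x : I -> 'X_{1..n}) :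
  Lop G (\sum_(i <- r) c i *: 'X_[x i]) = \sum_(i <- r) c i *: G (x i).
Proof.
elim: r => [|y r IH]; first by rewrite !big_nil Lop0.
by rewrite !big_cons LopD IH LopZX.
Qed.

Definition supp_in V a := forall i, i \notin V -> a i = 0%N.

Lemma eop_out S V a : supp_in V a -> ~~ (S \subset V) -> eop S a = 0.
Proof.
move=> ha /subsetPn [i iS iV]; rewrite /eop.
case: ifP => // /forallP /(_ i); rewrite iS ha //.
Qed.

Lemma eopM S V1 V2 a b :
  [disjoint V1 & V2] -> supp_in V1 a -> supp_in V2 b ->
  eop S (a + b) = if S \subset V1 :|: V2 then
     eop (S :&: V1) a * eop (S :&: V2) b else 0.
Proof.
move=> dis ha hb.
have dV i : i \in V1 -> i \notin V2.
  move=> i1; apply/negP => i2; have := dis; rewrite disjoint_subset => /subsetP H.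
  by have := H i i1; rewrite inE i2.
case: ifP => Hsub; last first.
  apply: (@eop_out _ (V1 :|: V2)); last by rewrite Hsub.
  by move=> i; rewrite inE negb_or => /andP [i1 i2]; rewrite mnmDE ha ?hb.
have Hs : suppb (a + b) S = suppb a (S :&: V1) && suppb b (S :&: V2).
  apply/idP/andP.
    move/forallP => H; split.
      apply/forallP => j; have := H j; rewrite mnmDE inE.
      case: (boolP (j \in V1)) => j1.
        by rewrite (hb j (dV j j1)) addn0 andbT.
      by rewrite ha // andbF.
    apply/forallP => j; have := H j; rewrite mnmDE inE.
    case: (boolP (j \in V2)) => j2.
      by rewrite (ha j) ?add0n ?andbT //; apply/negP => j1; move: (dV j j1); rewrite j2.
    by rewrite hb // andbF.
  move=> [/forallP H1 /forallP H2]; apply/forallP => j.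
  have := H1 j; have := H2 j; rewrite mnmDE !inE.
  case: (boolP (j \in V1)) => i1.
    by rewrite (hb j (dV j i1)) addn0 !andbT => _ H.
  rewrite (ha j i1) add0n !andbF.
  case: (boolP (j \in V2)) => i2.
    by rewrite !andbT => H _.
  rewrite (hb j i2) !andbF /= => _ _; rewrite eq_sym eqbF_neg; apply/negP => iS.
  by move/subsetP: Hsub => /(_ j iS); rewrite inE (negbTE i1) (negbTE i2).
rewrite /eop Hs; case: (suppb a _) => //=; last by rewrite mul0r.
case: (suppb b _) => //=; last by rewrite mulr0.
rewrite -mpolyXD; congr 'X_[_]; apply/mnmP => i.
rewrite /ind_mnm !mnmE !inE.
case: (boolP (i \in V1)) => i1.
  by rewrite (hb i (dV i i1)) (negbTE (dV i i1)) andbT andbF /= subn0 !addn0.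
rewrite (ha i i1) andbF /= sub0n !add0n.
case: (boolP (i \in V2)) => i2; first by rewrite andbT.
by rewrite (hb i i2) andbF.
Qed.


Lemma EopM S V1 V2 f g :
  [disjoint V1 & V2] ->
  (forall a, a \in msupp f -> supp_in V1 a) ->
  (forall b, b \in msupp g -> supp_in V2 b) ->
  Eop S (f * g) = if S \subset V1 :|: V2 then
     Eop (S :&: V1) f * Eop (S :&: V2) g else 0.
Proof.
move=> dis hf hg; rewrite !Eop_L mpolyME Lop_sum big_allpairs /=.
case: ifP => Hsub.
  rewrite /Lop mulr_suml; apply: eq_big_seq => a Ha.
  rewrite mulr_sumr big_seq [RHS]big_seq; apply: eq_bigr => b Hb.
  by rewrite (eopM _ dis (hf a Ha) (hg b Hb)) Hsub -scalerAl -scalerAr scalerA.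
rewrite big1_seq // => a /= Ha; rewrite big1_seq // => b /= Hb.
by rewrite (eopM _ dis (hf a Ha) (hg b Hb)) Hsub scaler0.
Qed.

Lemma Eop_out S V f :
  (forall a, a \in msupp f -> supp_in V a) -> ~~ (S \subset V) -> Eop S f = 0.
Proof.
move=> hf nS; rewrite Eop_L /Lop big1_seq // => a /= Ha.
by rewrite (eop_out (hf a Ha) nS) scaler0.
Qed.

Lemma Eop_meval S V f (v v' : 'I_n -> F) :
  (forall a, a \in msupp f -> supp_in V a) -> {in V, v =1 v'} ->
  meval v (Eop S f) = meval v' (Eop S f).
Proof.
move=> hf hv; rewrite /Eop !raddf_sum /= big_seq_cond [RHS]big_seq_cond.
apply: eq_bigr => a /andP [Ha _]; rewrite !mevalZ !mevalX; congr (_ * _).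
apply: eq_bigr => i _; case: (boolP (i \in V)) => iV; first by rewrite hv.
by rewrite mnmBE (hf a Ha i iV) sub0n !expr0.
Qed.

End MP.


Section Tens.
Variable F : fieldType.

Lemma tens1mx r s :
  (1%:M : 'M[F]_r) *t (1%:M : 'M[F]_s) = 1%:M.
Proof.
apply/matrixP => i j.
case: (mxtens_indexP i) => i1 i2; case: (mxtens_indexP j) => j1 j2.
rewrite tensmxE !mxE -natrM mulnb.
by rewrite (inj_eq (can_inj (@mxtens_indexK _ _))) xpair_eqE.
Qed.

Lemma row_free_tens m1 n1 m2 n2 (X : 'M[F]_(m1, n1)) (Y : 'M[F]_(m2, n2)) :
  row_free X -> row_free Y -> row_free (X *t Y).
Proof.
move=> /row_freeP [X' hX] /row_freeP [Y' hY]; apply/row_freeP.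
by exists (X' *t Y'); rewrite tensmx_mul hX hY tens1mx.
Qed.

Lemma rank_tens m1 n1 m2 n2 (A : 'M[F]_(m1, n1)) (B : 'M[F]_(m2, n2)) :
  \rank (A *t B) = (\rank A * \rank B)%N.
Proof.
have -> : A *t B = (col_base A *t col_base B) *m (row_base A *t row_base B).
  rewrite tensmx_mul !mulmx_base; apply/matrixP => i j; rewrite !mxE; reflexivity.
rewrite mxrankMfree; last by apply: row_free_tens; apply: row_base_free.
rewrite -mxrank_tr trmx_tens.
have frA : row_free (col_base A)^T by rewrite /row_free mxrank_tr; exact: col_base_full.
have frB : row_free (col_base B)^T by rewrite /row_free mxrank_tr; exact: col_base_full.
rewrite (eqP (row_free_tens frA frB)). reflexivity. Qed.

Lemma sum_sel_l (I : finType) (c : bool) (x : I) (G : I -> F) :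
  \sum_k (c && (k == x))%:R * G k = c%:R * G x.
Proof.
case: c => /=; last by rewrite big1 ?mul0r // => k _; rewrite mul0r.
rewrite (bigD1 x) //= eqxx big1 ?addr0 // => k /negbTE ->; by rewrite mul0r.
Qed.

Lemma sum_sel_r (I : finType) (c : bool) (x : I) (G : I -> F) :
  \sum_k G k * (c && (k == x))%:R = G x * c%:R.
Proof.
rewrite (eq_bigr (fun k => (c && (k == x))%:R * G k)); last by move=> k _; rewrite mulrC.
by rewrite sum_sel_l mulrC.
Qed.

End Tens.


Lemma pcm_entryE (F : fieldType) (m : nat) (h : {mpoly F[m + m]}) A B :
  pcm_entry h A B = Eop (varset A B) h.
Proof. by []. Qed.

Lemma disj_varset (m : nat) (Y1 Y2 Z1 Z2 : {set 'I_m}) :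
  [disjoint Y1 & Y2] -> [disjoint Z1 & Z2] ->
  [disjoint varset Y1 Z1 & varset Y2 Z2].
Proof.
rewrite -!setI_eq0 varsetI => /eqP -> /eqP ->.
apply/eqP/setP => i; rewrite in_varset inE; case: (split i) => j; by rewrite inE.
Qed.

Lemma setUI_l (T : finType) (P1 P2 Y1 Y2 : {set T}) :
  [disjoint Y1 & Y2] -> P1 \subset Y1 -> P2 \subset Y2 -> (P1 :|: P2) :&: Y1 = P1.
Proof.
move=> d s1 s2; apply/setP => x; rewrite !inE.
case: (boolP (x \in P1)) => h1 /=; first by rewrite (subsetP s1).
case: (boolP (x \in P2)) => h2 //=.
by rewrite (disjointFl d (subsetP s2 x h2)).
Qed.

Lemma setUI_r (T : finType) (P1 P2 Y1 Y2 : {set T}) :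
  [disjoint Y1 & Y2] -> P1 \subset Y1 -> P2 \subset Y2 -> (P1 :|: P2) :&: Y2 = P2.
Proof.
move=> d s1 s2; rewrite setUC (@setUI_l _ P2 P1 Y2 Y1) //.
by rewrite disjoint_sym.
Qed.

Lemma entry_mul (F : fieldType) (m : nat) (Y1 Y2 Z1 Z2 : {set 'I_m})
  (f g : {mpoly F[m + m]}) :
  [disjoint Y1 & Y2] -> [disjoint Z1 & Z2] ->
  poly_in_vars Y1 Z1 f -> poly_in_vars Y2 Z2 g ->
  forall p q, pcm_entry (f * g) p q =
   if (p \subset Y1 :|: Y2) && (q \subset Z1 :|: Z2) then
     pcm_entry f (p :&: Y1) (q :&: Z1) * pcm_entry g (p :&: Y2) (q :&: Z2)
   else 0.
Proof.
move=> dY dZ hf hg p q; rewrite !pcm_entryE.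
rewrite (EopM _ (disj_varset dY dZ) hf hg) varsetU varset_sub !varsetI.
by [].
Qed.

Lemma entry_out (F : fieldType) (m : nat) (Y1 Z1 : {set 'I_m})
  (f : {mpoly F[m + m]}) : poly_in_vars Y1 Z1 f ->
  forall p q : {set 'I_m}, ~~ ((p \subset Y1) && (q \subset Z1)) -> pcm_entry f p q = 0.
Proof.
move=> hf p q H; rewrite pcm_entryE (Eop_out hf) // varset_sub //.
Qed.

Lemma mulmx_sel_l (F : fieldType) p q r (x : 'I_p -> 'I_q) (c : 'I_p -> bool)
  (X : 'M[F]_(q, r)) :
  (\matrix_(i, k) (c i && (k == x i))%:R) *m X = \matrix_(i, l) ((c i)%:R * X (x i) l).
Proof.
apply/matrixP => i l; rewrite !mxE.
under eq_bigr => k _ do rewrite mxE.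
exact: sum_sel_l.
Qed.

Lemma mulmx_sel_r (F : fieldType) p q r (x : 'I_r -> 'I_q) (c : 'I_r -> bool)
  (X : 'M[F]_(p, q)) :
  X *m (\matrix_(j, l) (c l && (j == x l))%:R) = \matrix_(i, l) (X i (x l) * (c l)%:R).
Proof.
apply/matrixP => i l; rewrite !mxE.
under eq_bigr => k _ do rewrite mxE.
exact: sum_sel_r.
Qed.

Lemma pcm_evalE (F : fieldType) (m : nat) (h : {mpoly F[m + m]}) v i j :
  pcm_eval h v i j = meval v (pcm_entry h (enum_val i) (enum_val j)).
Proof. by rewrite !mxE. Qed.

Lemma rank_eval_mul (F : fieldType) (m : nat) (Y1 Y2 Z1 Z2 : {set 'I_m})
  (f g : {mpoly F[m + m]}) :
  [disjoint Y1 & Y2] -> [disjoint Z1 & Z2] ->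
  poly_in_vars Y1 Z1 f -> poly_in_vars Y2 Z2 g ->
  forall v, \rank (pcm_eval (f * g) v) =
            (\rank (pcm_eval f v) * \rank (pcm_eval g v))%N.
Proof.
move=> dY dZ hf hg v.
set A := pcm_eval f v; set B := pcm_eval g v; set C := pcm_eval (f * g) v.
have CE i j : C i j = if (enum_val i \subset Y1 :|: Y2) && (enum_val j \subset Z1 :|: Z2)
   then A (enum_rank (enum_val i :&: Y1)) (enum_rank (enum_val j :&: Z1)) *
        B (enum_rank (enum_val i :&: Y2)) (enum_rank (enum_val j :&: Z2))
   else 0.
  rewrite /C /A /B !pcm_evalE (entry_mul dY dZ hf hg).
  case: ifP => _; last by rewrite meval0.
  by rewrite mevalM !enum_rankK.
have A0 (i j : 'I_#|{set 'I_m}|) : ~~ ((enum_val i \subset Y1) && (enum_val j \subset Z1)) -> A i j = 0.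
  by move=> H; rewrite /A pcm_evalE (entry_out hf H) meval0.
have B0 (i j : 'I_#|{set 'I_m}|) : ~~ ((enum_val i \subset Y2) && (enum_val j \subset Z2)) -> B i j = 0.
  by move=> H; rewrite /B pcm_evalE (entry_out hg H) meval0.
clearbody A B C.
rewrite -rank_tens; apply/eqP; rewrite eqn_leq; apply/andP; split.
  have -> : C = (\matrix_(i < #|{set 'I_m}|, k < #|{set 'I_m}| * #|{set 'I_m}|) ((enum_val i \subset Y1 :|: Y2) &&
                 (k == mxtens_index (enum_rank (enum_val i :&: Y1),
                                     enum_rank (enum_val i :&: Y2))))%:R)
              *m (A *t B) *m
              (\matrix_(k < #|{set 'I_m}| * #|{set 'I_m}|, j < #|{set 'I_m}|) ((enum_val j \subset Z1 :|: Z2) &&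
                 (k == mxtens_index (enum_rank (enum_val j :&: Z1),
                                     enum_rank (enum_val j :&: Z2))))%:R).
    rewrite mulmx_sel_l mulmx_sel_r; apply/matrixP => i j; rewrite CE !mxE !mxtens_indexK /=.
    case: (_ \subset _); case: (_ \subset _); rewrite /= ?mul1r ?mulr1 ?mul0r ?mulr0 //.
  exact: leq_trans (mxrankM_maxl _ _) (mxrankM_maxr _ _).
have -> : A *t B =
   (\matrix_(k < #|{set 'I_m}| * #|{set 'I_m}|, i < #|{set 'I_m}|)
      (((enum_val (mxtens_unindex k).1 \subset Y1) && (enum_val (mxtens_unindex k).2 \subset Y2))
        && (i == enum_rank (enum_val (mxtens_unindex k).1 :|: enum_val (mxtens_unindex k).2)))%:R)
   *m C *m
   (\matrix_(j < #|{set 'I_m}|, l < #|{set 'I_m}| * #|{set 'I_m}|)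
      (((enum_val (mxtens_unindex l).1 \subset Z1) && (enum_val (mxtens_unindex l).2 \subset Z2))
        && (j == enum_rank (enum_val (mxtens_unindex l).1 :|: enum_val (mxtens_unindex l).2)))%:R).
  rewrite mulmx_sel_l mulmx_sel_r; apply/matrixP => k l; rewrite !mxE.
  case: (mxtens_indexP k) => k1 k2; case: (mxtens_indexP l) => l1 l2.
  rewrite !mxtens_indexK /= CE !enum_rankK.
  case hk1: (enum_val k1 \subset Y1); case hk2: (enum_val k2 \subset Y2);
  case hl1: (enum_val l1 \subset Z1); case hl2: (enum_val l2 \subset Z2);
  rewrite /= ?mul0r ?mulr0.
  - rewrite (setUSS hk1 hk2) (setUSS hl1 hl2) /= (setUI_l dY hk1 hk2) (setUI_r dY hk1 hk2).
    by rewrite (setUI_l dZ hl1 hl2) (setUI_r dZ hl1 hl2) !enum_valK mul1r mulr1.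
  all: try first [ by rewrite (A0 k1 l1) ?hk1 ?hl1 ?mul0r | by rewrite (B0 k2 l2) ?hk2 ?hl2 ?mulr0 ].
exact: leq_trans (mxrankM_maxl _ _) (mxrankM_maxr _ _).
Qed.


Lemma maxrank_spec (F : fieldType) (m : nat) (h : {mpoly F[m + m]}) :
  (exists v, \rank (pcm_eval h v) = maxrank h) /\
  (forall v, (\rank (pcm_eval h v) <= maxrank h)%N).
Proof.
have real v : rank_realized h (\rank (pcm_eval h v)).
  rewrite /rank_realized; case: excluded_middle_informative => // H.
  by exfalso; apply: H; exists v.
have ord v : (\rank (pcm_eval h v) < (#|{set 'I_m}|).+1)%N.
  by rewrite ltnS rank_leq_row.
split; last first.
  move=> v; rewrite /maxrank.
  exact: (@leq_bigmax_cond _ (fun k : 'I_(#|{set 'I_m}|).+1 => rank_realized h k)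
            (fun k => nat_of_ord k) (Ordinal (ord v)) (real v)).
have Hc : (0 < #|(fun k : 'I_(#|{set 'I_m}|).+1 => rank_realized h k)|)%N.
  apply/card_gt0P; exists (Ordinal (ord (fun _ => 0))); exact: real.
have [k0 Hk0 E] := @eq_bigmax_cond _ (fun k : 'I_(#|{set 'I_m}|).+1 => rank_realized h k)
            (fun k => nat_of_ord k) Hc.
have E' : maxrank h = k0 := E.
move: Hk0; rewrite E' unfold_in /rank_realized.
by case: excluded_middle_informative => // [[v Hv]] _; exists v.
Qed.

Theorem proposition3 (F : fieldType) (m : nat)
    (Y1 Y2 Z1 Z2 : {set 'I_m}) (f g : {mpoly F[m + m]}) :
  [disjoint Y1 & Y2] -> [disjoint Z1 & Z2] ->
  poly_in_vars Y1 Z1 f -> poly_in_vars Y2 Z2 g ->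
  maxrank (f * g) = (maxrank f * maxrank g)%N.
Proof.
move=> dY dZ hf hg.
have [[v1 E1] B1] := maxrank_spec f.
have [[v2 E2] B2] := maxrank_spec g.
have [[v0 E0] B0] := maxrank_spec (f * g).
apply/eqP; rewrite eqn_leq; apply/andP; split.
  by rewrite -E0 (rank_eval_mul dY dZ hf hg) leq_mul.
pose v i := if i \in varset Y1 Z1 then v1 i else v2 i.
have ef : pcm_eval f v = pcm_eval f v1.
  apply/matrixP => i j; rewrite !pcm_evalE !pcm_entryE.
  by apply: (Eop_meval _ hf) => i0 i0V; rewrite /v i0V.
have eg : pcm_eval g v = pcm_eval g v2.
  apply/matrixP => i j; rewrite !pcm_evalE !pcm_entryE.
  apply: (Eop_meval _ hg) => i0 i0V; rewrite /v.
  by rewrite (disjointFl (disj_varset dY dZ) i0V).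
by rewrite -E1 -E2 -ef -eg -(rank_eval_mul dY dZ hf hg).
Qed.
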